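(* Let $X^+$ be a one-sided subshift with natural extension $\tilde X$, and let $c_kc_{k-1}\dots c_1c_0$ ($k\ge1$) be a block in $\mathcal L(\tilde X)$. Then $\mathrm{sig}(\mathrm{sig}(c_kc_{k-1}\dots c_1)c_0)=\mathrm{sig}(c_kc_{k-1}\dots c_1c_0)$.
   Context: $\mathcal A$ is a finite alphabet and $\sigma$ the shift, $(\sigma x)_i=x_{i+1}$. A one-sided subshift is a nonempty closed $\sigma$-invariant $X^+\subseteq\mathcal A^{\mathbb N}$; its natural extension is $\tilde X=\{x\in\mathcal A^{\mathbb Z}: x_px_{p+1}\dots\in X^+\ \forall p\in\mathbb Z\}$; $\mathcal L(\tilde X)$ is the set of finite blocks occurring in points of $\tilde X$. For $a_{-n}\dots a_0\in\mathcal L(\tilde X)$, $\mathrm{fol}(a_{-n}\dots a_0)=\{b_0b_1\dots\in X^+:\exists b\in\tilde X,\ b_{-n}\dots b_0=a_{-n}\dots a_0\}$. A block $a_{-n}\dots a_0\in\mathcal L(\tilde X)$ with $n\ge1$ is significant if $\mathrm{fol}(a_{-n}\dots a_0)\subsetneq\mathrm{fol}(a_{-n+1}\dots a_0)$; single symbols in $\mathcal L(\tilde X)$ are also counted as significant. The significant form $\mathrm{sig}(a_{-n}\dots a_0)$ is $a_{-k}\dots a_0$ with $k\le n$ maximal such that $a_{-k}\dots a_0$ is significant. *)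

(* Defs.v *)
From mathcomp Require Import all_boot all_order all_algebra.
From mathcomp Require Import boolp.
Set Implicit Arguments. Unset Strict Implicit. Unset Printing Implicit Defensive.
Import GRing.Theory Num.Theory.
Local Open Scope ring_scope.

Section Subshift.
Variable A : finType.

Definition shift (x : nat -> A) : nat -> A := fun n => x n.+1.

(* Closedness in the product (Cantor) topology of A^N, A discrete finite:
   a point all of whose finite prefixes are prefixes of points of X is in X. *)
Definition closed_seqset (X : (nat -> A) -> Prop) : Prop :=
  forall x : nat -> A,
    (forall n : nat, exists y, X y /\ forall i : nat, (i < n)%N -> y i = x i) ->
    X x.

Definition one_sided_subshift (X : (nat -> A) -> Prop) : Prop :=
  [/\ exists x, X x,
      closed_seqset X &
      forall x, X x -> X (shift x)].

Definition nat_ext (X : (nat -> A) -> Prop) (x : int -> A) : Prop :=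
  forall p : int, X (fun n : nat => x (p + n%:Z)).

Definition block_at (x : int -> A) (p : int) (len : nat) : seq A :=
  [seq x (p + i%:Z) | i <- iota 0 len].

Definition inL (X : (nat -> A) -> Prop) (w : seq A) : Prop :=
  exists x, nat_ext X x /\ exists p : int, block_at x p (size w) = w.

(* A block w = [:: a_{-n}; ...; a_0] (n = size w - 1): its follower set *)
Definition fol (X : (nat -> A) -> Prop) (w : seq A) (b : nat -> A) : Prop :=
  exists x, [/\ nat_ext X x,
               block_at x (- ((size w).-1)%:Z) (size w) = w &
               forall m : nat, b m = x m%:Z].

Definition strict_subset (P Q : (nat -> A) -> Prop) : Prop :=
  (forall b, P b -> Q b) /\ exists b, Q b /\ ~ P b.

(* Significant blocks; behead drops a_{-n}, giving a_{-n+1} ... a_0. *)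
Definition significant (X : (nat -> A) -> Prop) (w : seq A) : Prop :=
  inL X w /\
  (size w = 1%N \/ ((2 <= size w)%N /\ strict_subset (fol X w) (fol X (behead w)))).

(* The suffix a_{-k} ... a_0 of w (length k+1). *)
Definition suffix_len (w : seq A) (k : nat) : seq A := drop (size w - k.+1) w.

Definition sig (X : (nat -> A) -> Prop) (w : seq A) : seq A :=
  suffix_len w
    (\max_(k <- [seq k <- iota 0 (size w) | `[< significant X (suffix_len w k) >]]) k)%N.

End Subshift.

(* Main.v *)
Require Import Defs.
From mathcomp Require Import all_boot all_order all_algebra.
From mathcomp Require Import boolp zify.
Import GRing.Theory Num.Theory.
Local Open Scope ring_scope.

Lemma block_atS (A : finType) (x : int -> A) p n :
  block_at x p n.+1 = rcons (block_at x p n) (x (p + n%:Z)).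
Proof. by rewrite /block_at -addn1 iotaD map_cat /= cats1 add0n. Qed.

Lemma size_block (A : finType) (x : int -> A) p n : size (block_at x p n) = n.
Proof. by rewrite size_map size_iota. Qed.

Lemma block_at_cons (A : finType) (x : int -> A) p n :
  block_at x p n.+1 = x p :: block_at x (p + 1) n.
Proof.
rewrite /block_at /= addr0; congr cons.
rewrite (iotaDl 1 0) -map_comp; apply: eq_map => i /=; congr x; lia.
Qed.

Lemma block_at_shift (A : finType) (x : int -> A) d p n :
  block_at (fun i => x (i + d)) p n = block_at x (p + d) n.
Proof. by apply: eq_map => i /=; congr x; lia. Qed.

Lemma natext_shift (A : finType) X (x : int -> A) d :
  nat_ext X x -> nat_ext X (fun i => x (i + d)).
Proof.
move=> hx p; have := hx (p + d); congr X; apply: funext => n /=; congr x; lia.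
Qed.

Lemma inL_rcons (A : finType) X (u : seq A) a : inL X (rcons u a) -> inL X u.
Proof.
move=> [x [hx [p hp]]]; exists x; split => //; exists p.
rewrite size_rcons block_atS in hp.
by case/rcons_inj: hp.
Qed.

Lemma fol_behead_sub (A : finType) X (w : seq A) b :
  (2 <= size w)%N -> fol X w b -> fol X (behead w) b.
Proof.
case: w => [|a w'] //= h [x [hx hb hm]]; exists x; split => //.
move: hb; rewrite /= block_at_cons => -[_ <-].
have hs : forall p n, size (block_at x p n) = n by move=> p n; rewrite size_map size_iota.
rewrite hs; congr block_at; lia.
Qed.

Lemma fol_ext (A : finType) X (u : seq A) a :
  (2 <= size u)%N -> (forall b, fol X (behead u) b -> fol X u b) ->
  forall b, fol X (behead (rcons u a)) b -> fol X (rcons u a) b.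
Proof.
case: u => [|u0 u'] //= hu H b [x [hx hbl hbm]].
move: hbl; rewrite size_rcons /= block_atS => /rcons_inj [hb1 ha].
set n := size u' in hu hb1 ha.
have hy : fol X u' (fun m : nat => x (m%:Z - 1)).
  exists (fun i => x (i + (-1))); split => //; first exact: natext_shift.
  by rewrite block_at_shift -hb1 size_block; congr block_at; lia.
have [z [hz hzb hzm]] := H _ hy.
exists (fun i => z (i + 1)); split; first exact: natext_shift.
- rewrite /= size_rcons block_at_shift block_atS -rcons_cons; congr rcons.
    by rewrite -hzb /= -/n; congr block_at; lia.
  rewrite -ha (_ : _ + _ + _ = 1); last by lia.
  by rewrite -(hzm 1%N); congr x; lia.
- move=> m; rewrite hbm (_ : _ + 1 = Posz m.+1); last by lia.
  by rewrite -hzm; congr x; lia.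
Qed.

Lemma sig_rcons (A : finType) X (u : seq A) a :
  (1 <= size u)%N -> significant X (rcons u a) -> significant X u.
Proof.
move=> hu [hL hs]; split; first exact: inL_rcons hL.
case: (boolP (size u == 1%N)) => [/eqP|] h1; first by left.
have hu2 : (2 <= size u)%N by lia.
right; split => //; split; first by move=> b; apply: fol_behead_sub.
case: hs => [|[_ [_ [b [hb hnb]]]]]; first by rewrite size_rcons; lia.
apply: contrapT => hn; apply: hnb; apply: (@fol_ext _ _ u a hu2 _ b hb) => b' hb'.
apply: contrapT => hnb'; apply: hn; by exists b'.
Qed.

Lemma maxin (r : seq nat) (P : pred nat) :
  (\max_(i <- r | P i) i)%N = 0%N \/
  ((\max_(i <- r | P i) i)%N \in r /\ P (\max_(i <- r | P i) i)%N).
Proof.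
elim: r => [|a r IH]; first by rewrite big_nil; left.
rewrite big_cons; case: ifP => Pa.
  case: (leqP a (\max_(i <- r | P i) i)%N) => h.
      case: IH => [->|[h1 h2]]; [by left|].
    by right; rewrite in_cons h1 orbT.
  by right; rewrite in_cons eqxx.
case: IH => [->|[h1 h2]]; [by left|].
by right; rewrite in_cons h1 orbT.
Qed.

Definition M (A : finType) (X : (nat -> A) -> Prop) (w : seq A) :=
  (\max_(k <- iota 0 (size w) | `[< significant X (suffix_len w k) >]) k)%N.
Arguments M {A}.

Lemma sigE (A : finType) (X : (nat -> A) -> Prop) (w : seq A) : sig (A:=A) X w = suffix_len w (M X w).
Proof. by rewrite /sig big_filter. Qed.

Lemma M_lt (A : finType) X (w : seq A) : (1 <= size w)%N -> (M X w < size w)%N.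
Proof.
move=> h; suff : (M X w <= (size w).-1)%N by lia.
apply/bigmax_leqP_seq => i; rewrite mem_iota => /andP[_ hi] _; lia.
Qed.

Arguments M_lt {A}.

Theorem lemma5p1 (A : finType) (X : (nat -> A) -> Prop)
  (hX : one_sided_subshift X) (c : seq A) (c0 : A)
  (hk : (1 <= size c)%N) (hL : inL X (rcons c c0)) :
  sig X (rcons (sig X c) c0) = sig X (rcons c c0).
Proof.
set w := rcons c c0.
have hw : size w = (size c).+1 by rewrite size_rcons.
have hm := M_lt X c hk; set m := M X c in hm.
have hv : rcons (sig X c) c0 = drop (size c - m.+1) w.
  by rewrite sigE /suffix_len /w drop_rcons // leq_subr.
rewrite hv; set v := drop _ w.
have hsv : size v = m.+2 by rewrite size_drop hw; lia.
have hsuf : forall k, (k <= m.+1)%N -> suffix_len v k = suffix_len w k.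
  move=> k hk'; rewrite /suffix_len /v drop_drop hsv; congr drop; lia.
have hMv := M_lt X v (ltac:(by rewrite hsv) : (0 < size v)%N); rewrite hsv in hMv.
rewrite !sigE; suff e : M X v = M X w by rewrite e hsuf // -e -ltnS.
apply/eqP; rewrite eqn_leq; apply/andP; split.
  apply/bigmax_leqP_seq => i; rewrite mem_iota hsv => /andP[_ hi].
  rewrite hsuf; last by lia.
  move=> hP; apply: leq_bigmax_seq => //; rewrite mem_iota hw; lia.
case: (maxin (iota 0 (size w)) (fun k => `[< significant X (suffix_len w k) >])).
  by rewrite /M => ->.
rewrite -/(M X w) mem_iota => -[/andP[_ hj] /asboolP hP].
move: hj hP; case hMw: (M X w) => [//|j] hj hP.
have hsj : suffix_len w j.+1 = rcons (suffix_len c j) c0.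
  rewrite /suffix_len /w size_rcons (_ : (size c).+1 - j.+2 = size c - j.+1)%N; last by lia.
  by rewrite drop_rcons //; lia.
rewrite hsj in hP; have hc := @sig_rcons A X (suffix_len c j) c0.
have hjm : (j <= m)%N.
  apply: leq_bigmax_seq; first by rewrite mem_iota; lia.
  by apply/asboolP; apply: hc => //; rewrite /suffix_len size_drop; lia.
apply: leq_bigmax_seq; first by rewrite mem_iota hsv; lia.
by rewrite hsuf ?hsj; [apply/asboolP | lia].
Qed.
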